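(* Let $T$ be a first-order theory over $\Sigma$ and $\varphi$ a sentence over $\Sigma$ such that $T\models\varphi$. Then $\mathrm{Opt}_\varphi$ is a monotone propagator for $T$.
   Context: Vocabularies are finite sets of predicate symbols. Truth values $\mathbf{t},\mathbf{f},\mathbf{u},\mathbf{i}$ with precision order $\mathbf{u} \le_p \mathbf{t} \le_p \mathbf{i}$, $\mathbf{u} \le_p \mathbf{f} \le_p \mathbf{i}$ ($\mathbf{t},\mathbf{f}$ incomparable). A four-valued $\Sigma$-structure $\tilde I$ has domain $D$ and assigns to each $P/n\in\Sigma$ a function $P^{\tilde I}:D^n\to\{\mathbf{t},\mathbf{f},\mathbf{u},\mathbf{i}\}$; two-valued structures are identified with ordinary structures. On structures with a fixed domain, $\le_p$ is pointwise; $\mathrm{glb}_{\le_p}$ is the greatest lower bound (glb of the empty set: all $\mathbf{i}$). For a sentence $\varphi$, $\mathrm{Opt}_\varphi(\tilde I)=\mathrm{glb}_{\le_p}\{M\mid M\text{ two-valued},\tilde I\le_p M, M\models\varphi\}$. A propagator for $T$ is a map $O$ on four-valued $\Sigma$-structures with (i) $\tilde I\le_p O(\tilde I)$ and (ii) $O(\tilde I)\le_p M$ for every two-valued model $M$ of $T$ with $\tilde I\le_p M$; it is monotone if $\tilde I\le_p\tilde J$ implies $O(\tilde I)\le_p O(\tilde J)$. *)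

(* Defs.v *)
From mathcomp Require Import all_boot.
From Stdlib Require Import ClassicalEpsilon.
Set Implicit Arguments. Unset Strict Implicit. Unset Printing Implicit Defensive.

Inductive tv4 := Tt | Tf | Tu | Ti.

Definition le_p (a b : tv4) : Prop :=
  a = b \/ a = Tu \/ b = Ti.

Section FO.
Variable sym : finType.
Variable ar : sym -> nat.

Inductive form : Type :=
| FPred (P : sym) (args : 'I_(ar P) -> nat)
| FEq (x y : nat)
| FTop | FBot
| FNot (f : form)
| FAnd (f g : form)
| FOr (f g : form)
| FImp (f g : form)
| FAll (x : nat) (f : form)
| FEx (x : nat) (f : form).

Fixpoint free_in (z : nat) (f : form) : bool :=
  match f with
  | FPred P a => [exists i, a i == z]
  | FEq x y => (x == z) || (y == z)
  | FTop | FBot => false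
  | FNot g => free_in z g
  | FAnd g h | FOr g h | FImp g h => free_in z g || free_in z h
  | FAll x g | FEx x g => (x != z) && free_in z g
  end.

Definition sentence (f : form) : Prop := forall z, ~~ free_in z f.

Definition struct2 (D : Type) := forall P : sym, ('I_(ar P) -> D) -> bool.

Definition fstruct (D : Type) := forall P : sym, ('I_(ar P) -> D) -> tv4.

Definition upd (D : Type) (v : nat -> D) (x : nat) (d : D) : nat -> D :=
  fun y => if y == x then d else v y.

Fixpoint sat (D : Type) (M : struct2 D) (v : nat -> D) (f : form) : Prop :=
  match f with
  | FPred P a => M P (fun i => v (a i))
  | FEq x y => v x = v y
  | FTop => True
  | FBot => False
  | FNot g => ~ sat M v g
  | FAnd g h => sat M v g /\ sat M v h
  | FOr g h => sat M v g \/ sat M v h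
  | FImp g h => sat M v g -> sat M v h
  | FAll x g => forall d : D, sat M (upd v x d) g
  | FEx x g => exists d : D, sat M (upd v x d) g
  end.

Definition models (D : Type) (M : struct2 D) (f : form) : Prop :=
  forall v : nat -> D, sat M v f.

Definition model_of (D : Type) (M : struct2 D) (T : form -> Prop) : Prop :=
  forall g, T g -> models M g.

Definition entails (T : form -> Prop) (f : form) : Prop :=
  forall (D : Type), inhabited D -> forall M : struct2 D, model_of M T -> models M f.

Definition emb (D : Type) (M : struct2 D) : fstruct D :=
  fun P a => if M P a then Tt else Tf.

Definition leS (D : Type) (I J : fstruct D) : Prop :=
  forall P a, le_p (I P a) (J P a).

Definition is_glb (D : Type) (S : fstruct D -> Prop) (G : fstruct D) : Prop :=
  (forall J, S J -> leS G J) /\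
  (forall H, (forall J, S J -> leS H J) -> leS H G).

(* glb_{<=p} S (for S empty this is the all-i structure). *)
Definition glbS (D : Type) (S : fstruct D -> Prop) : fstruct D :=
  epsilon (inhabits (fun _ _ => Ti)) (is_glb S).

Definition Opt (f : form) (D : Type) (I : fstruct D) : fstruct D :=
  glbS (fun J => exists M : struct2 D, [/\ leS I (emb M), models M f & J = emb M]).

Definition propagator (T : form -> Prop)
    (O : forall D : Type, fstruct D -> fstruct D) : Prop :=
  forall (D : Type), inhabited D -> forall I : fstruct D,
    leS I (O D I) /\
    (forall M : struct2 D, model_of M T -> leS I (emb M) -> leS (O D I) (emb M)).

Definition monotone_prop (O : forall D : Type, fstruct D -> fstruct D) : Prop :=
  forall (D : Type) (I J : fstruct D), leS I J -> leS (O D I) (O D J).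

End FO.

(* Main.v *)
Require Import Defs.
From mathcomp Require Import all_boot.
From Stdlib Require Import ClassicalEpsilon.

Definition pglb (A : tv4 -> Prop) : tv4 :=
  if excluded_middle_informative (A Tu \/ (A Tt /\ A Tf)) then Tu
  else if excluded_middle_informative (A Tt) then Tt
  else if excluded_middle_informative (A Tf) then Tf else Ti.

Lemma pglb_lb A x : A x -> le_p (pglb A) x.
Proof.
unfold pglb, le_p.
destruct (excluded_middle_informative _) as [h|h]; [tauto|].
destruct (excluded_middle_informative _) as [h1|h1];
[|destruct (excluded_middle_informative _) as [h2|h2]];
destruct x; intro hx; try tauto.
Qed.

Lemma pglb_gr A y : (forall x, A x -> le_p y x) -> le_p y (pglb A).
Proof.
unfold pglb, le_p; intro H.
destruct (excluded_middle_informative _) as [h|h].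
- destruct h as [h|[h1 h2]].
  + destruct (H _ h) as [e|[e|e]]; try discriminate; tauto.
  + destruct (H _ h1) as [e|[e|e]]; destruct (H _ h2) as [e'|[e'|e']];
    try discriminate; try tauto; subst; discriminate.
- destruct (excluded_middle_informative _) as [h1|h1].
  + destruct (H _ h1) as [e|[e|e]]; try discriminate; tauto.
  + destruct (excluded_middle_informative _) as [h2|h2].
    * destruct (H _ h2) as [e|[e|e]]; try discriminate; tauto.
    * tauto.
Qed.

Lemma le_p_trans a b c : le_p a b -> le_p b c -> le_p a c.
Proof. unfold le_p; destruct a, b, c; intuition discriminate. Qed.

Lemma glbS_spec {sym : finType} {ar : sym -> nat} {D : Type}
  (S : fstruct ar D -> Prop) : is_glb S (glbS S).
Proof.
unfold glbS. apply epsilon_spec.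
exists (fun P a => pglb (fun x => exists J, S J /\ J P a = x)).
split.
- intros J HJ P a. apply pglb_lb. eauto.
- intros H HH P a. apply pglb_gr. intros x [J [HJ <-]]. exact (HH J HJ P a).
Qed.

Theorem proposition3p9 (sym : finType) (ar : sym -> nat)
    (T : form ar -> Prop) (phi : form ar)
    (hT : forall g, T g -> sentence g) (hphi : sentence phi)
    (hent : entails T phi) :
  propagator T (Opt phi) /\ monotone_prop (Opt phi).
Proof.
split.
- intros D hD I. split.
  + unfold Opt. apply (proj2 (glbS_spec _)).
    intros J [M [h1 h2 ->]]. exact h1.
  + intros M hM hI. unfold Opt. apply (proj1 (glbS_spec _)).
    exists M. split; auto.
- intros D I J hIJ. unfold Opt at 2. apply (proj2 (glbS_spec _)).
  intros K [M [h1 h2 ->]]. unfold Opt. apply (proj1 (glbS_spec _)).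
  exists M. split; auto. intros P a. eapply le_p_trans; eauto.
Qed.
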